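(* Let $n=1$, $d=2$, $u_1$ a positive integer and $u_2=1$, and suppose the constants are chosen so that the point $V_2=(\lambda^{(1)}_2,\lambda^{(c)}_2)$ lies in the interior of the solid cone $K_1=\{(a,b)\in\mathbb R\times\mathbb C: a-\lambda^{(1)}_1/u_1\geqslant|b-\lambda^{(c)}_1/u_1|\}$. Then $N$ acts freely on $\mu^{-1}(0)$, condition (S) holds, so $M=\mu^{-1}(0)/N$ is a smooth $4$-manifold, and the induced hypersymplectic structure on $M$ is non-degenerate everywhere if and only if $u_1=1$.
   Context: Setting: $\mathbb C^{2,2}=\mathbb C^2\times\mathbb C^2$ with coordinates $(z,w)$, $g=\mathrm{Re}\sum_k(dz_k\,d\bar z_k-dw_k\,d\bar w_k)$, $I(z,w)=(iz,-iw)$, $S(z,w)=(w,z)$, $T=IS$, $\omega_A(Y,Z)=g(Y,AZ)$; $\mathbb T^2$ acts by $(z_k,w_k)\mapsto(e^{i\theta_k}z_k,e^{i\theta_k}w_k)$. With $u_1,u_2\in\mathbb Z$, $\beta\colon\mathbb R^2\to\mathbb R$, $e_k\mapsto u_k$, $\mathfrak n=\ker\beta$ with inclusion $\iota$, and $N\subset\mathbb T^2$ the kernel of the induced homomorphism $\mathbb T^2\to\mathbb T^1$. Fix real $\lambda^{(j)}_k$, $\lambda^{(c)}_k=\lambda^{(2)}_k+i\lambda^{(3)}_k$; $\mu_I(z,w)=\sum_k(\tfrac12(|z_k|^2+|w_k|^2)+\lambda^{(1)}_k)\iota^*e_k$, $(\mu_S+i\mu_T)(z,w)=\sum_k(iz_k\bar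 w_k+\lambda^{(c)}_k)\iota^*e_k$ (identifying $\mathbb R^2$ with its dual). Condition (S): at no $p\in\mu^{-1}(0)$ is there nonzero $(X_1,X_2,X_3)\in\mathfrak n^3$ with $(IX_1+SX_2+TX_3)_p=0$. The induced forms $\omega'_A$ on $M$ satisfy $\pi^*\omega'_A=\omega_A|_{\mu^{-1}(0)}$; non-degeneracy means all three are non-degenerate at every point. *)

(* Defs.v *)
From HB Require Import structures.
From mathcomp Require Import all_boot all_order all_algebra.
From mathcomp Require Import complex.
Set Implicit Arguments. Unset Strict Implicit. Unset Printing Implicit Defensive.
Import Order.TTheory GRing.Theory Num.Theory.
Local Open Scope ring_scope.
Local Open Scope complex_scope.

Section HK.
Variable R : rcfType.
Local Notation C := R[i].

(* A point (or tangent vector) of C^{2,2} = C^2 x C^2 : (z, w), z w : 'I_2 -> C. *)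
Definition pt := (('I_2 -> C) * ('I_2 -> C))%type.

Definition peq (p q : pt) : Prop := forall k, p.1 k = q.1 k /\ p.2 k = q.2 k.
Definition padd (p q : pt) : pt := (fun k => p.1 k + q.1 k, fun k => p.2 k + q.2 k).
Definition pzero : pt := (fun _ => 0, fun _ => 0).

Definition opI (p : pt) : pt := (fun k => 'i * p.1 k, fun k => - ('i * p.2 k)).
Definition opS (p : pt) : pt := (p.2, p.1).
Definition opT (p : pt) : pt := opI (opS p).

Definition gmet (Y Z : pt) : R :=
  complex.Re (\sum_(k < 2) (Y.1 k * (Z.1 k)^* - Y.2 k * (Z.2 k)^*)).
Definition omega (A : pt -> pt) (Y Z : pt) : R := gmet Y (A Z).

(* Lie algebra n = ker beta, beta(e_k) = u_k *)
Definition in_n (u : 'I_2 -> int) (X : 'I_2 -> R) : Prop :=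
  \sum_(k < 2) (u k)%:~R * X k = 0.

(* Fundamental vector field of X in Lie(T^2) = R^2 at p:
   d/dt (e^{i t X_k} z_k, e^{i t X_k} w_k) at t = 0. *)
Definition fund (X : 'I_2 -> R) (p : pt) : pt :=
  (fun k => 'i * (X k)%:C * p.1 k, fun k => 'i * (X k)%:C * p.2 k).

(* Moment maps, evaluated on X in n (iota^* e_k applied to X is X_k). *)
Definition muI (l1 : 'I_2 -> R) (p : pt) (X : 'I_2 -> R) : R :=
  \sum_(k < 2) (2^-1 * ((Normc.normc (p.1 k)) ^+ 2 + (Normc.normc (p.2 k)) ^+ 2) + l1 k) * X k.
Definition muC (lc : 'I_2 -> C) (p : pt) (X : 'I_2 -> R) : C :=
  \sum_(k < 2) ('i * p.1 k * (p.2 k)^* + lc k) * (X k)%:C.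

Definition in_level (u : 'I_2 -> int) (l1 : 'I_2 -> R) (lc : 'I_2 -> C) (p : pt) : Prop :=
  forall X, in_n u X -> muI l1 p X = 0 /\ muC lc p X = 0.

Definition dmuI (p v : pt) (X : 'I_2 -> R) : R :=
  \sum_(k < 2) complex.Re (p.1 k * (v.1 k)^* + p.2 k * (v.2 k)^*) * X k.
Definition dmuC (p v : pt) (X : 'I_2 -> R) : C :=
  \sum_(k < 2) 'i * (v.1 k * (p.2 k)^* + p.1 k * (v.2 k)^*) * (X k)%:C.

Definition tangent (u : 'I_2 -> int) (p v : pt) : Prop :=
  forall X, in_n u X -> dmuI p v X = 0 /\ dmuC p v X = 0.

(* The torus T^2 (pairs of unit complex numbers) and the subgroup N, the kernel
   of the induced homomorphism T^2 -> T^1, (a_1, a_2) |-> a_1^{u_1} a_2^{u_2}. *)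
Definition in_N (u : 'I_2 -> int) (a : 'I_2 -> C) : Prop :=
  (forall k, Normc.normc (a k) = 1) /\ \prod_(k < 2) (a k) ^ (u k) = 1.
Definition act (a : 'I_2 -> C) (p : pt) : pt :=
  (fun k => a k * p.1 k, fun k => a k * p.2 k).

Definition N_acts_freely (u : 'I_2 -> int) (l1 : 'I_2 -> R) (lc : 'I_2 -> C) : Prop :=
  forall p, in_level u l1 lc p ->
  forall a, in_N u a -> peq (act a p) p -> forall k, a k = 1.

Definition condS (u : 'I_2 -> int) (l1 : 'I_2 -> R) (lc : 'I_2 -> C) : Prop :=
  forall p, in_level u l1 lc p ->
  forall X1 X2 X3, in_n u X1 -> in_n u X2 -> in_n u X3 ->
  peq (padd (opI (fund X1 p)) (padd (opS (fund X2 p)) (opT (fund X3 p)))) pzero ->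
  forall k, X1 k = 0 /\ X2 k = 0 /\ X3 k = 0.

(* omega'_A is non-degenerate at pi(p): since pi^* omega'_A = omega_A restricted
   to T_p mu^{-1}(0), this means the radical of omega_A on T_p mu^{-1}(0) is
   contained in the vertical space {X_p : X in n} = T_p (N p). *)
Definition nondeg_at (u : 'I_2 -> int) (A : pt -> pt) (p : pt) : Prop :=
  forall v, tangent u p v ->
  (forall w, tangent u p w -> omega A v w = 0) ->
  exists X, in_n u X /\ peq v (fund X p).

Definition hypersymplectic_nondeg (u : 'I_2 -> int) (l1 : 'I_2 -> R) (lc : 'I_2 -> C) : Prop :=
  forall p, in_level u l1 lc p ->
  nondeg_at u opI p /\ nondeg_at u opS p /\ nondeg_at u opT p.

Definition in_K1 (u : 'I_2 -> int) (l1 : 'I_2 -> R) (lc : 'I_2 -> C) (a : R) (b : C) : Prop :=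
  Normc.normc (b - lc ord0 / (u ord0)%:~R) <= a - l1 ord0 / (u ord0)%:~R.
Definition V2_in_interior_K1 (u : 'I_2 -> int) (l1 : 'I_2 -> R) (lc : 'I_2 -> C) : Prop :=
  exists2 e : R, 0 < e &
    forall (a : R) (b : C), `|a - l1 ord_max| < e -> Normc.normc (b - lc ord_max) < e ->
      in_K1 u l1 lc a b.

End HK.

(* Main.v *)
Require Import Defs.
From HB Require Import structures.
From mathcomp Require Import all_boot all_order all_algebra.
From mathcomp Require Import complex ring lra zify.
From Stdlib Require Import FunctionalExtensionality.
Import Order.TTheory GRing.Theory Num.Theory.
Local Open Scope ring_scope.
Local Open Scope complex_scope.
Set Implicit Arguments. Unset Strict Implicit. Unset Printing Implicit Defensive.

Section Aux.
Variable R : rcfType.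
Implicit Types x y : R[i].
Local Notation RE := complex.Re.
Local Notation IM := complex.Im.
Lemma ReM x y : RE (x * y) = RE x * RE y - IM x * IM y.
Proof. by case: x => a b; case: y => c d. Qed.
Lemma ImM x y : IM (x * y) = RE x * IM y + IM x * RE y.
Proof. by case: x => a b; case: y => c d. Qed.
Lemma ReD x y : RE (x + y) = RE x + RE y.
Proof. by case: x => a b; case: y => c d. Qed.
Lemma ImD x y : IM (x + y) = IM x + IM y.
Proof. by case: x => a b; case: y => c d. Qed.
Lemma ReN x : RE (- x) = - RE x. Proof. by case: x. Qed.
Lemma ImN x : IM (- x) = - IM x. Proof. by case: x. Qed.
Lemma ReB x y : RE (x - y) = RE x - RE y. Proof. by rewrite ReD ReN. Qed.
Lemma ImB x y : IM (x - y) = IM x - IM y. Proof. by rewrite ImD ImN. Qed.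
Lemma ReJ x : RE (x^*) = RE x. Proof. by case: x. Qed.
Lemma ImJ x : IM (x^*) = - IM x. Proof. by case: x. Qed.
Lemma Rei : RE ('i : R[i]) = 0. Proof. by []. Qed.
Lemma Imi : IM ('i : R[i]) = 1. Proof. by []. Qed.
Lemma ReC (r : R) : RE (r%:C) = r. Proof. by []. Qed.
Lemma ImC (r : R) : IM (r%:C) = 0. Proof. by []. Qed.
Lemma Re0 : RE (0 : R[i]) = 0. Proof. by []. Qed.
Lemma Im0 : IM (0 : R[i]) = 0. Proof. by []. Qed.
Lemma Re1 : RE (1 : R[i]) = 1. Proof. by []. Qed.
Lemma Im1 : IM (1 : R[i]) = 0. Proof. by []. Qed.
Lemma ceqE x y : x = y <-> RE x = RE y /\ IM x = IM y.
Proof. by case: x => a b; case: y => c d /=; split => [[-> ->]|[-> ->]]. Qed.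
Lemma normc2 x : Normc.normc x ^+ 2 = RE x ^+ 2 + IM x ^+ 2.
Proof. case: x => a b /=; rewrite sqr_sqrtr //; apply: addr_ge0; apply: sqr_ge0. Qed.
End Aux.

Definition cE := (ReM, ImM, ReD, ImD, ReN, ImN, ReB, ImB, ReJ, ImJ, Rei, Imi,
  ReC, ImC, Re0, Im0, Re1, Im1).

Section Pt.
Variable R : rcfType.
Local Notation RE := complex.Re.
Local Notation IM := complex.Im.
Local Notation pt := (pt R).
Implicit Types Y Z W : pt.

Lemma sum2 (V : nmodType) (F : 'I_2 -> V) : \sum_(k < 2) F k = F ord0 + F ord_max.
Proof. rewrite !big_ord_recl big_ord0 addr0; congr (_ + F _); exact: val_inj. Qed.

Lemma ord2 (k : 'I_2) : k = ord0 \/ k = ord_max.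
Proof. case: k => [[|[|m]] Hm]; [left|right|]; try exact: val_inj; by []. Qed.

Definition pscale (r : R) Y : pt := (fun k => r%:C * Y.1 k, fun k => r%:C * Y.2 k).
Definition pJ Y : pt := (Y.1, fun k => - Y.2 k).

Lemma pt_ext Y Z : (forall k, Y.1 k = Z.1 k /\ Y.2 k = Z.2 k) -> Y = Z.
Proof.
case: Y Z => [a b] [c d] /= H; congr pair; apply: functional_extensionality => k;
by case: (H k).
Qed.

Definition mkpt (z1 z2 w1 w2 : R[i]) : pt :=
  (fun k => if k == ord0 then z1 else z2, fun k => if k == ord0 then w1 else w2).
Lemma ptind (P : pt -> Prop) :
  (forall a b c d e f g h : R, P (mkpt (a +i* b) (c +i* d) (e +i* f) (g +i* h))) -> forall Y, P Y.
Proof.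
move=> H Y; have -> : Y = mkpt (Y.1 ord0) (Y.1 ord_max) (Y.2 ord0) (Y.2 ord_max).
  by apply: pt_ext => k; case: (ord2 k) => ->.
by case: (Y.1 ord0) => ? ?; case: (Y.1 ord_max) => ? ?; case: (Y.2 ord0) => ? ?;
  case: (Y.2 ord_max) => ? ?.
Qed.

Ltac destr Y := elim/ptind: Y => ? ? ? ? ? ? ? ?.
Ltac crunch := rewrite /gmet /opI /opS /opT /padd /pscale /pJ /mkpt ?sum2 /=; ring.
Lemma pt_ext2 Y Z : Y.1 ord0 = Z.1 ord0 -> Y.1 ord_max = Z.1 ord_max ->
  Y.2 ord0 = Z.2 ord0 -> Y.2 ord_max = Z.2 ord_max -> Y = Z.
Proof. move=> h1 h2 h3 h4; apply: pt_ext => k; by case: (ord2 k) => ->. Qed.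
Ltac ptcrunch := apply: pt_ext2 => /=; congr (_ +i* _); ring.

Lemma gmetC Y Z : gmet Y Z = gmet Z Y. Proof. destr Y; destr Z; crunch. Qed.
Lemma gmetDr Y Z W : gmet Y (padd Z W) = gmet Y Z + gmet Y W. Proof. destr Y; destr Z; destr W; crunch. Qed.
Lemma gmetDl Y Z W : gmet (padd Z W) Y = gmet Z Y + gmet W Y. Proof. destr Y; destr Z; destr W; crunch. Qed.
Lemma gmetZr Y r Z : gmet Y (pscale r Z) = r * gmet Y Z. Proof. destr Y; destr Z; crunch. Qed.
Lemma gmetZl Y r Z : gmet (pscale r Z) Y = r * gmet Z Y. Proof. destr Y; destr Z; crunch. Qed.
Lemma opID Y Z : opI (padd Y Z) = padd (opI Y) (opI Z). Proof. destr Y; destr Z; ptcrunch. Qed.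
Lemma opSD Y Z : opS (padd Y Z) = padd (opS Y) (opS Z). Proof. destr Y; destr Z; ptcrunch. Qed.
Lemma opTD Y Z : opT (padd Y Z) = padd (opT Y) (opT Z). Proof. destr Y; destr Z; ptcrunch. Qed.
Lemma opIZ r Y : opI (pscale r Y) = pscale r (opI Y). Proof. destr Y; ptcrunch. Qed.
Lemma opSZ r Y : opS (pscale r Y) = pscale r (opS Y). Proof. destr Y; ptcrunch. Qed.
Lemma opTZ r Y : opT (pscale r Y) = pscale r (opT Y). Proof. destr Y; ptcrunch. Qed.
Lemma opII Y : opI (opI Y) = pscale (-1) Y. Proof. destr Y; ptcrunch. Qed.
Lemma opIS Y : opI (opS Y) = opT Y. Proof. by []. Qed.
Lemma opIT Y : opI (opT Y) = pscale (-1) (opS Y). Proof. destr Y; ptcrunch. Qed.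
Lemma opSI Y : opS (opI Y) = pscale (-1) (opT Y). Proof. destr Y; ptcrunch. Qed.
Lemma opSS Y : opS (opS Y) = Y. Proof. destr Y; ptcrunch. Qed.
Lemma opST Y : opS (opT Y) = pscale (-1) (opI Y). Proof. destr Y; ptcrunch. Qed.
Lemma opTI Y : opT (opI Y) = opS Y. Proof. destr Y; ptcrunch. Qed.
Lemma opTS Y : opT (opS Y) = opI Y. Proof. destr Y; ptcrunch. Qed.
Lemma opTT Y : opT (opT Y) = Y. Proof. destr Y; ptcrunch. Qed.
Lemma skewI Y Z : gmet Y (opI Z) = - gmet (opI Y) Z. Proof. destr Y; destr Z; crunch. Qed.
Lemma skewS Y Z : gmet Y (opS Z) = - gmet (opS Y) Z. Proof. destr Y; destr Z; crunch. Qed.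
Lemma skewT Y Z : gmet Y (opT Z) = - gmet (opT Y) Z. Proof. destr Y; destr Z; crunch. Qed.
Lemma nII Y : gmet (opI Y) (opI Y) = gmet Y Y. Proof. destr Y; crunch. Qed.
Lemma nSS Y : gmet (opS Y) (opS Y) = - gmet Y Y. Proof. destr Y; crunch. Qed.
Lemma nTT Y : gmet (opT Y) (opT Y) = - gmet Y Y. Proof. destr Y; crunch. Qed.
Lemma o1 Y : gmet Y (opI Y) = 0. Proof. destr Y; crunch. Qed.
Lemma o2 Y : gmet Y (opS Y) = 0. Proof. destr Y; crunch. Qed.
Lemma o3 Y : gmet Y (opT Y) = 0. Proof. destr Y; crunch. Qed.
Lemma o4 Y : gmet (opI Y) (opS Y) = 0. Proof. destr Y; crunch. Qed.
Lemma o5 Y : gmet (opI Y) (opT Y) = 0. Proof. destr Y; crunch. Qed.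
Lemma o6 Y : gmet (opS Y) (opT Y) = 0. Proof. destr Y; crunch. Qed.
End Pt.
Section Rad.
Variable R : rcfType.
Local Notation pt := (pt R).
Implicit Types Y Z W v w d : pt.

Definition tanY Y v := gmet (opI Y) v = 0 /\ gmet (opS Y) v = 0 /\ gmet (opT Y) v = 0.

Lemma o4' Y : gmet (opS Y) (opI Y) = 0. Proof. by rewrite gmetC o4. Qed.
Lemma o5' Y : gmet (opT Y) (opI Y) = 0. Proof. by rewrite gmetC o5. Qed.
Lemma o6' Y : gmet (opT Y) (opS Y) = 0. Proof. by rewrite gmetC o6. Qed.

Definition proj Y w0 : pt :=
  padd w0 (padd (pscale (- gmet (opI Y) w0 / gmet Y Y) (opI Y))
     (padd (pscale (gmet (opS Y) w0 / gmet Y Y) (opS Y))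
           (pscale (gmet (opT Y) w0 / gmet Y Y) (opT Y)))).

Lemma proj_tan Y w0 : gmet Y Y != 0 -> tanY Y (proj Y w0).
Proof.
move=> hQ; rewrite /tanY /proj !gmetDr !gmetZr nII nSS nTT o4 o5 o6 o4' o5' o6'.
by split; [|split]; field.
Qed.

Lemma posdef d : gmet d (pJ d) = 0 -> forall k, d.1 k = 0 /\ d.2 k = 0.
Proof.
rewrite /gmet /pJ /= sum2 /= ?cE => H k.
have s0 : forall x : R, 0 <= x ^+ 2 by move=> x; apply: sqr_ge0.
set a1 := complex.Re (d.1 ord0) in H; set b1 := complex.Im (d.1 ord0) in H.
set a2 := complex.Re (d.2 ord0) in H; set b2 := complex.Im (d.2 ord0) in H.
set a3 := complex.Re (d.1 ord_max) in H; set b3 := complex.Im (d.1 ord_max) in H.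
set a4 := complex.Re (d.2 ord_max) in H; set b4 := complex.Im (d.2 ord_max) in H.
have E : a1^+2 + b1^+2 + a2^+2 + b2^+2 + a3^+2 + b3^+2 + a4^+2 + b4^+2 = 0.
  by rewrite -H; ring.
have z : forall x : R, x ^+ 2 = 0 -> x = 0 by move=> x /eqP; rewrite sqrf_eq0 => /eqP.
have h1 : a1 = 0 by apply: z; move: (s0 a1) (s0 b1) (s0 a2) (s0 b2) (s0 a3) (s0 b3) (s0 a4) (s0 b4); lra.
have h2 : b1 = 0 by apply: z; move: (s0 a1) (s0 b1) (s0 a2) (s0 b2) (s0 a3) (s0 b3) (s0 a4) (s0 b4); lra.
have h3 : a2 = 0 by apply: z; move: (s0 a1) (s0 b1) (s0 a2) (s0 b2) (s0 a3) (s0 b3) (s0 a4) (s0 b4); lra.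
have h4 : b2 = 0 by apply: z; move: (s0 a1) (s0 b1) (s0 a2) (s0 b2) (s0 a3) (s0 b3) (s0 a4) (s0 b4); lra.
have h5 : a3 = 0 by apply: z; move: (s0 a1) (s0 b1) (s0 a2) (s0 b2) (s0 a3) (s0 b3) (s0 a4) (s0 b4); lra.
have h6 : b3 = 0 by apply: z; move: (s0 a1) (s0 b1) (s0 a2) (s0 b2) (s0 a3) (s0 b3) (s0 a4) (s0 b4); lra.
have h7 : a4 = 0 by apply: z; move: (s0 a1) (s0 b1) (s0 a2) (s0 b2) (s0 a3) (s0 b3) (s0 a4) (s0 b4); lra.
have h8 : b4 = 0 by apply: z; move: (s0 a1) (s0 b1) (s0 a2) (s0 b2) (s0 a3) (s0 b3) (s0 a4) (s0 b4); lra.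
case: (ord2 k) => ->; split; apply/ceqE; by rewrite ?cE.
Qed.

Lemma dvec Y v : gmet Y Y != 0 -> tanY Y v ->
  let d := padd v (pscale (- (gmet v Y / gmet Y Y)) Y) in
  [/\ gmet d Y = 0, gmet d (opI Y) = 0, gmet d (opS Y) = 0, gmet d (opT Y) = 0
    & v = padd d (pscale (gmet v Y / gmet Y Y) Y)].
Proof.
move=> hQ [tI [tS tT]] d; rewrite /d !gmetDl !gmetZl o1 o2 o3.
rewrite (gmetC v (opI Y)) (gmetC v (opS Y)) (gmetC v (opT Y)) tI tS tT.
split; try field => //.
apply: pt_ext => k /=; split; apply/ceqE; rewrite ?cE; split; ring.
Qed.

Lemma conclude Y v d (k : R) : v = padd d (pscale k Y) -> gmet d (pJ d) = 0 ->
  v = pscale k Y.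
Proof.
move=> -> /posdef H; apply: pt_ext => j /=; case: (H j) => -> ->; by rewrite !add0r.
Qed.

Lemma radI Y v : gmet Y Y != 0 -> tanY Y v ->
  (forall w, tanY Y w -> gmet v (opI w) = 0) -> v = pscale (gmet v Y / gmet Y Y) Y.
Proof.
move=> hQ tv H; case: (dvec hQ tv) => dY dI dS dT Hv.
set d := padd _ _ in dY dI dS dT Hv.
apply: (conclude Hv).
have tw := proj_tan (pscale (-1) (opI (pJ d))) hQ.
have gY : gmet Y (opI (proj Y (pscale (-1) (opI (pJ d))))) = 0.
  by rewrite skewI; case: tw => -> _; rewrite oppr0.
have := H _ tw; rewrite {1}Hv gmetDl gmetZl gY mulr0 addr0 /proj.
rewrite !opID !opIZ opII opIT !gmetDr !gmetZr opII !gmetZr.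
rewrite (gmetC d (opI Y)) (gmetC d (opS Y)) (gmetC d (opT Y)) in dI dS dT.
rewrite gmetC in dY.
rewrite opIS (gmetC d Y) (gmetC d (opS Y)) (gmetC d (opT Y)) dY dS dT. rewrite !mulr0 !addr0 !mulN1r opprK. done.
Qed.
Lemma radS Y v : gmet Y Y != 0 -> tanY Y v ->
  (forall w, tanY Y w -> gmet v (opS w) = 0) -> v = pscale (gmet v Y / gmet Y Y) Y.
Proof.
move=> hQ tv H; case: (dvec hQ tv) => dY dI dS dT Hv.
set d := padd _ _ in dY dI dS dT Hv.
apply: (conclude Hv).
have tw := proj_tan (opS (pJ d)) hQ.
have gY : gmet Y (opS (proj Y (opS (pJ d)))) = 0.
  by rewrite skewS; case: tw => [tI [tS tT]]; rewrite ?tI ?tS ?tT oppr0.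
have := H _ tw; rewrite {1}Hv gmetDl gmetZl gY mulr0 addr0 /proj.
rewrite !opSD !opSZ ?opSS ?opSI ?opST !gmetDr !gmetZr.
rewrite (gmetC d (opI Y)) (gmetC d (opS Y)) (gmetC d (opT Y)) in dI dS dT.
rewrite gmetC in dY.
rewrite ?(gmetC d Y) ?(gmetC d (opI Y)) ?(gmetC d (opS Y)) ?(gmetC d (opT Y)) ?dY ?dI ?dS ?dT ?mulr0 ?addr0 ?mulN1r ?opprK ?mul1r ?add0r => //.
Qed.

Lemma radT Y v : gmet Y Y != 0 -> tanY Y v ->
  (forall w, tanY Y w -> gmet v (opT w) = 0) -> v = pscale (gmet v Y / gmet Y Y) Y.
Proof.
move=> hQ tv H; case: (dvec hQ tv) => dY dI dS dT Hv.
set d := padd _ _ in dY dI dS dT Hv.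
apply: (conclude Hv).
have tw := proj_tan (opT (pJ d)) hQ.
have gY : gmet Y (opT (proj Y (opT (pJ d)))) = 0.
  by rewrite skewT; case: tw => [tI [tS tT]]; rewrite ?tI ?tS ?tT oppr0.
have := H _ tw; rewrite {1}Hv gmetDl gmetZl gY mulr0 addr0 /proj.
rewrite !opTD !opTZ ?opTT ?opTI ?opTS !gmetDr !gmetZr.
rewrite (gmetC d (opI Y)) (gmetC d (opS Y)) (gmetC d (opT Y)) in dI dS dT.
rewrite gmetC in dY.
rewrite ?(gmetC d Y) ?(gmetC d (opI Y)) ?(gmetC d (opS Y)) ?(gmetC d (opT Y)) ?dY ?dI ?dS ?dT ?mulr0 ?addr0 ?mulN1r ?opprK ?mul1r ?add0r => //.
Qed.

End Rad.

Ltac destr Y := elim/ptind: Y => ? ? ? ? ? ? ? ?.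

Section Link.
Variable R : rcfType.
Local Notation pt := (pt R).
Local Notation RE := complex.Re.
Local Notation IM := complex.Im.
Variable u : 'I_2 -> int.
Hypothesis hu : u ord_max = 1.
Local Notation U := ((u ord0)%:~R : R).

Definition X0 : 'I_2 -> R := fun k => if k == ord0 then 1 else - U.
Lemma X00 : X0 ord0 = 1. Proof. by []. Qed.
Lemma X0m : X0 ord_max = - U. Proof. by []. Qed.

Lemma in_nE X : in_n u X <-> X ord_max = - U * X ord0.
Proof.
rewrite /in_n sum2 hu.
have -> : ((1:int)%:~R : R) = 1 by [].
rewrite mul1r; split => [H|->]; last by ring.
by rewrite -(subr0 (X ord_max)) -H; ring.
Qed.

Lemma X0n : in_n u X0. Proof. by apply/in_nE; rewrite X0m X00 mulr1. Qed.

Lemma fund_n X (p : pt) : in_n u X -> fund X p = pscale (X ord0) (fund X0 p).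
Proof.
move/in_nE => HX; destr p; apply: pt_ext2; rewrite /= ?HX /X0 /=; congr (_ +i* _); ring.
Qed.

Lemma dmuIE (p v : pt) (X : 'I_2 -> R) : dmuI p v X = - gmet (opI (fund X p)) v.
Proof. destr p; destr v; rewrite /dmuI /gmet /opI /fund /mkpt !sum2 /=; ring. Qed.
Lemma dmuCRe (p v : pt) (X : 'I_2 -> R) : RE (dmuC p v X) = - gmet (opS (fund X p)) v.
Proof. destr p; destr v; rewrite /dmuC /gmet /opS /fund /mkpt !sum2 /=; ring. Qed.
Lemma dmuCIm (p v : pt) (X : 'I_2 -> R) : IM (dmuC p v X) = - gmet (opT (fund X p)) v.
Proof. destr p; destr v; rewrite /dmuC /gmet /opT /opI /opS /fund /mkpt !sum2 /=; ring. Qed.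

Lemma tangentE (p v : pt) : tangent u p v <-> tanY (fund X0 p) v.
Proof.
split.
  move=> H; case: (H _ X0n) => h1 /ceqE [h2 h3].
  move: h1 h2 h3; rewrite dmuIE dmuCRe dmuCIm /= => h1 h2 h3.
  split; [|split]; apply: oppr_inj; rewrite oppr0 //.
move=> [t1 [t2 t3]] X HX; rewrite dmuIE (fund_n p HX); split.
  by rewrite opIZ gmetZl t1 mulr0 oppr0.
apply/ceqE; rewrite dmuCRe dmuCIm (fund_n p HX) opSZ opTZ !gmetZl t2 t3 /=.
by rewrite mulr0 oppr0.
Qed.

Lemma peq_eq (a b : pt) : a = b -> peq a b. Proof. by move=> ->. Qed.

Lemma keyv (p : pt) (k : R) :
  exists X, in_n u X /\ peq (pscale k (fund X0 p)) (fund X p).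
Proof.
exists (fun j => k * X0 j); split.
  by apply/in_nE; rewrite X0m X00; ring.
apply: peq_eq; destr p; apply: pt_ext2; rewrite /= /X0 /=; congr (_ +i* _); ring.
Qed.

Lemma nondegQ (p : pt) : gmet (fund X0 p) (fund X0 p) != 0 ->
  nondeg_at u (@opI R) p /\ nondeg_at u (@opS R) p /\ nondeg_at u (@opT R) p.
Proof.
move=> hQ.
split; [|split] => v /tangentE tv H.
- rewrite (radI hQ tv); first exact: keyv.
  move=> w /tangentE tw; exact: H.
- rewrite (radS hQ tv); first exact: keyv.
  move=> w /tangentE tw; exact: H.
- rewrite (radT hQ tv); first exact: keyv.
  move=> w /tangentE tw; exact: H.
Qed.
End Link.

Lemma divC (R : rcfType) (x : R[i]) (r : R) : r != 0 -> x / r%:C = (complex.Re x / r) +i* (complex.Im x / r).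
Proof.
move=> hr; case: x => a b /=.
rewrite -fmorphV /=; congr (_ +i* _); ring.
Qed.

Section Main.
Variable R : rcfType.
Local Notation pt := (pt R).
Local Notation RE := complex.Re.
Local Notation IM := complex.Im.
Variable u : 'I_2 -> int.
Hypothesis hu : u ord_max = 1.
Variable l1 : 'I_2 -> R.
Variable lc : 'I_2 -> R[i].
Local Notation U := ((u ord0)%:~R : R).
Definition AA := U * l1 ord_max - l1 ord0.
Definition BR := U * RE (lc ord_max) - RE (lc ord0).
Definition BI := U * IM (lc ord_max) - IM (lc ord0).

Lemma levelE (a b c d e f g h : R) :
 in_level u l1 lc (mkpt (a +i* b) (c +i* d) (e +i* f) (g +i* h)) <->
 [/\ (a^+2 + b^+2 + e^+2 + f^+2) - U * (c^+2 + d^+2 + g^+2 + h^+2) = 2 * AA,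
     (a*f - b*e) - U * (c*h - d*g) = BR &
     (a*e + b*f) - U * (c*g + d*h) = BI].
Proof.
rewrite /AA /BR /BI.
case E0: (lc ord0) => [r0 i0]; case Em: (lc ord_max) => [rm im] /=.
split.
  move=> H; case: (H _ (@X0n R u hu)) => h1 h2.
  move: h1 h2; rewrite /muI /muC !sum2 !normc2 E0 Em /mkpt /X0 /= => h1 /ceqE /= [h2 h3].
  split; apply/eqP; rewrite -subr_eq0; apply/eqP.
  - by rewrite -[RHS](mulr0 2) -h1; field.
  - by rewrite -[RHS](mulr0 1) -h2; field.
  - by rewrite -[RHS](mulr0 1) -h3; field.
case=> h1 h2 h3 X /(@in_nE R u hu) HX.
rewrite /muI /muC !sum2 !normc2 E0 Em /mkpt /= HX; split.
  have -> : l1 ord0 = U * l1 ord_max - (a^+2 + b^+2 + e^+2 + f^+2 - U * (c^+2 + d^+2 + g^+2 + h^+2)) / 2.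
    by rewrite h1; field.
  by field.
have -> : r0 = U * rm - ((a*f - b*e) - U * (c*h - d*g)) by rewrite h2; ring.
have -> : i0 = U * im - ((a*e + b*f) - U * (c*g + d*h)) by rewrite h3; ring.
apply/ceqE => /=; split; ring.
Qed.

Lemma V2E : 0 < u ord0 -> V2_in_interior_K1 u l1 lc -> 0 < AA /\ BR^+2 + BI^+2 < AA^+2.
Proof.
move=> hu0 [e he H].
have hU : 0 < U by rewrite ltr0z.
have hU0 : U != 0 by rewrite gt_eqF.
have := H (l1 ord_max - e/2) (lc ord_max).
rewrite /in_K1 (_ : ((u ord0)%:~R : R[i]) = U%:C); last by rewrite rmorph_int.
rewrite divC // /AA /BR /BI.
case E0: (lc ord0) => [r0 i0]; case Em: (lc ord_max) => [rm im] /=.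
rewrite !subrr expr0n addr0 sqrtr0.
have -> : l1 ord_max - e / 2 - l1 ord_max = - (e/2) by ring.
rewrite normrN ger0_norm; last by lra.
move=> /(_ ltac:(lra) he).
set xr := rm - r0 / U; set xi := im - i0 / U; set al := l1 ord_max - l1 ord0 / U.
have -> : l1 ord_max - e / 2 - l1 ord0 / U = al - e/2 by rewrite /al; ring.
move=> Hs.
have X0 : 0 <= xr ^+ 2 + xi ^+ 2 by apply: addr_ge0; apply: sqr_ge0.
have s0 := sqrtr_ge0 (xr ^+ 2 + xi ^+ 2).
have s2 := sqr_sqrtr X0.
set s := Num.sqrt _ in s0 s2 Hs.
have hal : e / 2 <= al by lra.
have hX : xr ^+ 2 + xi ^+ 2 < al ^+ 2 by rewrite -s2; nra.
have -> : U * l1 ord_max - l1 ord0 = U * al by rewrite /al; field.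
have -> : U * rm - r0 = U * xr by rewrite /xr; field.
have -> : U * im - i0 = U * xi by rewrite /xi; field.
split; first by apply: mulr_gt0 => //; lra.
rewrite !exprMn -mulrDr ltr_pM2l //.
by apply: exprn_gt0.
Qed.

Lemma prod2 (F : 'I_2 -> R[i]) : \prod_(k < 2) F k = F ord0 * F ord_max.
Proof. rewrite !big_ord_recl big_ord0 mulr1; congr (_ * F _); exact: val_inj. Qed.

Lemma freeL : 0 < u ord0 -> 0 < AA -> N_acts_freely u l1 lc.
Proof.
move=> hu0 hA p; elim/ptind: p => a b c d e f g0 h0 /levelE [h1 h2 h3] g [hn hg] Hact k.
have hU : 0 < U by rewrite ltr0z.
have hg0 : g ord0 = 1.
  case: (eqVneq (g ord0) 1) => // hg1.
  case: (Hact ord0) => /= e1 e2.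
  have : (g ord0 - 1) * (a +i* b) == 0 by rewrite mulrBl e1 mul1r subrr.
  rewrite mulf_eq0 subr_eq0 (negbTE hg1) /= => /eqP /ceqE /= [ha hb].
  have : (g ord0 - 1) * (e +i* f) == 0 by rewrite mulrBl e2 mul1r subrr.
  rewrite mulf_eq0 subr_eq0 (negbTE hg1) /= => /eqP /ceqE /= [he hf].
  rewrite ha hb he hf in h1; exfalso.
  have : 0 <= c^+2 + d^+2 + g0^+2 + h0^+2 by apply: addr_ge0; [apply: addr_ge0; [apply: addr_ge0|]|]; apply: sqr_ge0.
  nra.
case: (ord2 k) => -> //.
move: hg; rewrite prod2 hg0 exp1rz mul1r hu expr1z //.
Qed.

Lemma percompK (x1 x2 x3 zr zi wr wi : R) :
  (- x1 * zr - x2 * wi - x3 * wr) = 0 -> (- x1 * zi + x2 * wr - x3 * wi) = 0 -> (x1 * wr - x2 * zi + x3 * zr) = 0 -> (x1 * wi + x2 * zr + x3 * zi) = 0 ->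
  [/\ (x1^+2 - x2^+2 - x3^+2) * zr = 0, (x1^+2 - x2^+2 - x3^+2) * zi = 0, (x1^+2 - x2^+2 - x3^+2) * wr = 0 & (x1^+2 - x2^+2 - x3^+2) * wi = 0].
Proof.
move=> f1 f2 f3 f4; split.
  - have -> : (x1^+2 - x2^+2 - x3^+2) * zr = -x1*(- x1 * zr - x2 * wi - x3 * wr) - x3*(x1 * wr - x2 * zi + x3 * zr) - x2*(x1 * wi + x2 * zr + x3 * zi) by ring.
    by rewrite ?f1 ?f2 ?f3 ?f4; ring.
  - have -> : (x1^+2 - x2^+2 - x3^+2) * zi = -x1*(- x1 * zi + x2 * wr - x3 * wi) - x3*(x1 * wi + x2 * zr + x3 * zi) + x2*(x1 * wr - x2 * zi + x3 * zr) by ring.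
    by rewrite ?f1 ?f2 ?f3 ?f4; ring.
  - have -> : (x1^+2 - x2^+2 - x3^+2) * wr = x1*(x1 * wr - x2 * zi + x3 * zr) + x3*(- x1 * zr - x2 * wi - x3 * wr) - x2*(- x1 * zi + x2 * wr - x3 * wi) by ring.
    by rewrite ?f1 ?f2 ?f3 ?f4; ring.
  - have -> : (x1^+2 - x2^+2 - x3^+2) * wi = x1*(x1 * wi + x2 * zr + x3 * zi) + x3*(- x1 * zi + x2 * wr - x3 * wi) + x2*(- x1 * zr - x2 * wi - x3 * wr) by ring.
    by rewrite ?f1 ?f2 ?f3 ?f4; ring.
Qed.

Lemma percompB (x1 x2 x3 zr zi wr wi : R) :
  (- x1 * zr - x2 * wi - x3 * wr) = 0 -> (- x1 * zi + x2 * wr - x3 * wi) = 0 -> (x1 * wr - x2 * zi + x3 * zr) = 0 -> (x1 * wi + x2 * zr + x3 * zi) = 0 ->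
  2 * x1 * (zr * wi - zi * wr) + x2 * (zr^+2 + zi^+2 + wr^+2 + wi^+2) = 0 /\
   2 * x1 * (zr * wr + zi * wi) + x3 * (zr^+2 + zi^+2 + wr^+2 + wi^+2) = 0.
Proof.
move=> f1 f2 f3 f4; split.
  - have -> : 2 * x1 * (zr * wi - zi * wr) + x2 * (zr^+2 + zi^+2 + wr^+2 + wi^+2) = wr*(- x1 * zi + x2 * wr - x3 * wi) - wi*(- x1 * zr - x2 * wi - x3 * wr) - zi*(x1 * wr - x2 * zi + x3 * zr) + zr*(x1 * wi + x2 * zr + x3 * zi) by ring.
    by rewrite ?f1 ?f2 ?f3 ?f4; ring.
  - have -> : 2 * x1 * (zr * wr + zi * wi) + x3 * (zr^+2 + zi^+2 + wr^+2 + wi^+2) = -wr*(- x1 * zr - x2 * wi - x3 * wr) - wi*(- x1 * zi + x2 * wr - x3 * wi) + zr*(x1 * wr - x2 * zi + x3 * zr) + zi*(x1 * wi + x2 * zr + x3 * zi) by ring.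
    by rewrite ?f1 ?f2 ?f3 ?f4; ring.
Qed.

Lemma condSL : 0 < u ord0 -> 0 < AA -> BR^+2 + BI^+2 < AA^+2 -> condS u l1 lc.
Proof.
move=> hu0 hA hB p; elim/ptind: p => a b c d e f g h /levelE [h1 h2 h3].
move=> X1 X2 X3 /(@in_nE R u hu) H1 /(@in_nE R u hu) H2 /(@in_nE R u hu) H3 Hp.
have hU : 0 < U by rewrite ltr0z.
case: (Hp ord0) => /= /ceqE /= [p1 p2] /ceqE /= [p3 p4].
case: (Hp ord_max) => /= /ceqE /= [q1 q2] /ceqE /= [q3 q4].
rewrite H1 H2 H3 in q1 q2 q3 q4.
set x1 := X1 ord0 in p1 p2 p3 p4 q1 q2 q3 q4 H1 *.
set x2 := X2 ord0 in p1 p2 p3 p4 q1 q2 q3 q4 H2 *.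
set x3 := X3 ord0 in p1 p2 p3 p4 q1 q2 q3 q4 H3 *.
have hU2 : U ^+ 2 != 0 by rewrite expf_eq0 /= gt_eqF.
have hUn : U != 0 by rewrite gt_eqF.
have f1 : - x1 * a - x2 * f - x3 * e = 0 by rewrite -p1; ring.
have f2 : - x1 * b + x2 * e - x3 * f = 0 by rewrite -p2; ring.
have f3 : x1 * e - x2 * b + x3 * a = 0 by rewrite -p3; ring.
have f4 : x1 * f + x2 * a + x3 * b = 0 by rewrite -p4; ring.
have g1 : - (-U*x1) * c - (-U*x2) * h - (-U*x3) * g = 0 by rewrite -q1; ring.
have g2 : - (-U*x1) * d + (-U*x2) * g - (-U*x3) * h = 0 by rewrite -q2; ring.
have g3 : (-U*x1) * g - (-U*x2) * d + (-U*x3) * c = 0 by rewrite -q3; ring.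
have g4 : (-U*x1) * h + (-U*x2) * c + (-U*x3) * d = 0 by rewrite -q4; ring.
have [ka kb ke kf] := percompK f1 f2 f3 f4.
have [kc kd kg kh] := percompK g1 g2 g3 g4.
have [b1 b2] := percompB f1 f2 f3 f4.
have [b3 b4] := percompB g1 g2 g3 g4.
have h20 : (2:R) != 0 by rewrite pnatr_eq0.
have eR : x1 * BR = - x2 * AA.
  apply: (mulfI h20).
  rewrite -h2 (_ : 2 * (- x2 * AA) = - x2 * (2 * AA)); last by ring.
  rewrite -h1.
  apply: (mulfI hUn).
  have -> : U * (2 * (x1 * (a * f - b * e - U * (c * h - d * g)))) =
    U * (2 * x1 * (a * f - b * e) + x2 * (a^+2 + b^+2 + e^+2 + f^+2)) +
    U * (2 * (- U * x1) * (c * h - d * g) + (- U * x2) * (c^+2 + d^+2 + g^+2 + h^+2))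
    + U * (- x2 * (a ^+ 2 + b ^+ 2 + e ^+ 2 + f ^+ 2 - U * (c ^+ 2 + d ^+ 2 + g ^+ 2 + h ^+ 2))) by ring.
  by rewrite b1 b3; ring.
have eI : x1 * BI = - x3 * AA.
  apply: (mulfI h20).
  rewrite -h3 (_ : 2 * (- x3 * AA) = - x3 * (2 * AA)); last by ring.
  rewrite -h1.
  apply: (mulfI hUn).
  have -> : U * (2 * (x1 * (a * e + b * f - U * (c * g + d * h)))) =
    U * (2 * x1 * (a * e + b * f) + x3 * (a^+2 + b^+2 + e^+2 + f^+2)) +
    U * (2 * (- U * x1) * (c * g + d * h) + (- U * x3) * (c^+2 + d^+2 + g^+2 + h^+2))
    + U * (- x3 * (a ^+ 2 + b ^+ 2 + e ^+ 2 + f ^+ 2 - U * (c ^+ 2 + d ^+ 2 + g ^+ 2 + h ^+ 2))) by ring.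
  by rewrite b2 b4; ring.
have hAn : AA != 0 by rewrite gt_eqF.
case: (eqVneq x1 0) => hx1.
  have hx2 : x2 = 0.
    have E : x2 * AA == 0 by rewrite -[x2 * AA]opprK -mulNr -eR hx1 mul0r oppr0.
    by move: E; rewrite mulf_eq0 (negbTE hAn) orbF => /eqP.
  have hx3 : x3 = 0.
    have E : x3 * AA == 0 by rewrite -[x3 * AA]opprK -mulNr -eI hx1 mul0r oppr0.
    by move: E; rewrite mulf_eq0 (negbTE hAn) orbF => /eqP.
  move=> k; case: (ord2 k) => ->; first by rewrite -/x1 -/x2 -/x3.
  by rewrite H1 H2 H3 -/x1 -/x2 -/x3 hx1 hx2 hx3 mulr0.
exfalso.
have hK : x1^+2 - x2^+2 - x3^+2 != 0.
  have E : (x1^+2 - x2^+2 - x3^+2) * AA^+2 = x1^+2 * (AA^+2 - BR^+2 - BI^+2).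
    have -> : (x1^+2 - x2^+2 - x3^+2) * AA^+2 = x1^+2 * AA^+2 - (- x2 * AA)^+2 - (- x3 * AA)^+2 by ring.
    by rewrite -eR -eI; ring.
  have p : 0 < x1^+2 * (AA^+2 - BR^+2 - BI^+2).
    apply: mulr_gt0; last by lra.
    by rewrite lt_def sqr_ge0 andbT expf_eq0 /= hx1.
  apply/negP => /eqP E0; move: p; rewrite -E E0 mul0r ltxx //.
have z : forall y : R, (x1^+2 - x2^+2 - x3^+2) * y = 0 -> y = 0.
  by move=> y /eqP; rewrite mulf_eq0 (negbTE hK) /= => /eqP.
rewrite (z _ ka) (z _ kb) (z _ ke) (z _ kf) in h1.
have : 0 <= c^+2 + d^+2 + g^+2 + h^+2 by apply: addr_ge0; [apply: addr_ge0; [apply: addr_ge0|]|]; apply: sqr_ge0.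
nra.
Qed.



Lemma QneqL : u ord0 = 1 -> BR^+2 + BI^+2 < AA^+2 ->
  forall p, in_level u l1 lc p -> gmet (fund (X0 R u) p) (fund (X0 R u) p) != 0.
Proof.
move=> h1u hB p; elim/ptind: p => a b c d e f g h /levelE [h1 h2 h3].
have U1 : U = 1 by rewrite h1u.
rewrite U1 in h1 h2 h3.
rewrite /gmet /fund /X0 /mkpt sum2 /= U1.
apply/negP => /eqP HQ.
have HQ' : (a^+2 + b^+2 - e^+2 - f^+2) + (c^+2 + d^+2 - g^+2 - h^+2) = 0 by rewrite -HQ; ring.
have eA : AA = (a ^+ 2 + b ^+ 2 + e ^+ 2 + f ^+ 2 - 1 * (c ^+ 2 + d ^+ 2 + g ^+ 2 + h ^+ 2)) / 2.
  by rewrite h1; field.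
rewrite -h2 -h3 eA in hB.
set S1 := a*c + b*d - e*g - f*h.
set S2 := b*c - a*d - f*g + e*h.
have key : (a * f - b * e - 1 * (c * h - d * g)) ^+ 2 + (a * e + b * f - 1 * (c * g + d * h)) ^+ 2
   - ((a ^+ 2 + b ^+ 2 + e ^+ 2 + f ^+ 2 - 1 * (c ^+ 2 + d ^+ 2 + g ^+ 2 + h ^+ 2)) / 2) ^+ 2
   = S1 ^+ 2 + S2 ^+ 2 - ((a^+2 + b^+2 - e^+2 - f^+2) + (c^+2 + d^+2 - g^+2 - h^+2)) ^+ 2 / 4.
  by rewrite /S1 /S2; field.
rewrite HQ' expr0n /= mul0r subr0 in key.
have : 0 <= S1 ^+ 2 + S2 ^+ 2 by apply: addr_ge0; apply: sqr_ge0.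
lra.
Qed.

Lemma degenL : 0 < u ord0 -> u ord0 != 1 -> 0 < AA -> BR^+2 + BI^+2 < AA^+2 ->
  ~ hypersymplectic_nondeg u l1 lc.
Proof.
move=> hu0 hu1 hA hB Hnd.
have hU2 : 2 <= U.
  have h2 : (2 <= u ord0)%R by lia.
  by rewrite -(ler_int R) in h2.
set Bq := BR^+2 + BI^+2.
have Bq0 : 0 <= Bq by apply: addr_ge0; apply: sqr_ge0.
have hBq : Bq < AA^+2 by [].
set D := AA^+2 * U^+2 - (U^+2 - 1) * Bq.
have D0 : 0 < D.
  have -> : D = U^+2 * (AA^+2 - Bq) + Bq by rewrite /D; ring.
  have : 0 < U^+2 * (AA^+2 - Bq) by apply: mulr_gt0; [apply: exprn_gt0; lra | rewrite /Bq; lra].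
  lra.
have s0 := sqrtr_ge0 D.
have s2 := sqr_sqrtr (ltW D0).
set s := Num.sqrt D in s0 s2.
have hU1 : U - 1 != 0 by rewrite subr_eq0 gt_eqF //; lra.
have hU0 : U != 0 by rewrite gt_eqF //; lra.
set m := (AA * U + s) / (U - 1).
have mE : m * (U - 1) = AA * U + s by rewrite /m; field.
have mA : AA < m.
  have : AA * (U - 1) < m * (U - 1) by rewrite mE; nra.
  by rewrite ltr_pM2r //; lra.
have m0 : 0 < m by lra.
have mn0 : m != 0 by rewrite gt_eqF.
have quad : (U - 1) * m^+2 - 2 * AA * U * m + (U + 1) * Bq = 0.
  apply: (mulfI hU1); rewrite mulr0.
  have -> : (U - 1) * ((U - 1) * m ^+ 2 - 2 * AA * U * m + (U + 1) * Bq) =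
     (m * (U - 1)) ^+ 2 - 2 * AA * U * (m * (U - 1)) + (U^+2 - 1) * Bq by ring.
  rewrite mE; have -> : (AA * U + s) ^+ 2 = AA^+2 * U^+2 + 2 * AA * U * s + s^+2 by ring.
  rewrite s2 /D; ring.
set n := Bq / m.
have nm : n < m.
  rewrite /n ltr_pdivrMr //.
  have : AA * AA < m * m by nra.
  rewrite -!expr2; lra.
set p2 := (m - n) / U^+2.
have p20 : 0 < p2 by apply: divr_gt0; [lra| apply: exprn_gt0; lra].
have sm0 : 0 < Num.sqrt m by rewrite sqrtr_gt0.
have sm2 := sqr_sqrtr (ltW m0).
have c2 := sqr_sqrtr (ltW p20).
have c0 : 0 < Num.sqrt p2 by rewrite sqrtr_gt0.
set sm := Num.sqrt m in sm0 sm2.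
set c := Num.sqrt p2 in c0 c2.
have smn : sm != 0 by rewrite gt_eqF.
set p := mkpt ((BI / sm) +i* (- BR / sm)) (c +i* 0) (sm +i* 0) (0 +i* 0).
have Hp : in_level u l1 lc p.
  apply/levelE; split.
  - rewrite expr0n /= !addr0 !expr_div_n sqrrN c2 sm2.
    apply: (mulfI hU0); apply: (mulfI mn0).
    rewrite /p2 /n.
    have -> : m * (U * (BI ^+ 2 / m + BR ^+ 2 / m + m - U * ((m - Bq / m) / U ^+ 2))) =
       U * BI^+2 + U * BR^+2 + U * m^+2 - (m^+2 - Bq) by field; rewrite ?hU0 ?mn0.
    move: quad; rewrite /Bq => q.
    apply/eqP; rewrite -subr_eq0; apply/eqP; rewrite -q; ring.
  - by field; rewrite ?smn.
  - by field; rewrite ?smn.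
have [hI _] := Hnd p Hp.
set F := fund (X0 R u) p.
have HQ : gmet F F = 0.
  rewrite /F /gmet /fund /X0 /p /mkpt sum2 /=.
  apply: (mulfI mn0); rewrite mulr0.
  transitivity (m * ((BI^+2 + BR^+2) / sm^+2 - sm^+2 + U^+2 * c^+2)); first by field; rewrite ?smn.
  rewrite sm2 c2 /p2 /n /Bq; field; rewrite ?hU0 ?mn0 //.
have tv : tangent u p (opT F).
  apply/(@tangentE R u hu); split; [exact: o5 | split; [exact: o6|]].
  by rewrite nTT HQ oppr0.
have rad : forall w, tangent u p w -> omega (@opI R) (opT F) w = 0.
  move=> w /(@tangentE R u hu) [t1 [t2 t3]].
  by rewrite /omega skewI opIT gmetZl t2 mulr0 oppr0.
have [X [_ HX]] := hI (opT F) tv rad.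
case: (HX ord_max) => _ /ceqE [E _].
move: E; rewrite /F /fund /X0 /p /mkpt /= => E.
have E' : U * c = 0.
  by move: E; rewrite !mul0r !mul1r !mulr0 ?subr0 ?sub0r ?add0r ?addr0 ?opprK ?mulNr ?opprK => /eqP; rewrite oppr_eq0 => /eqP.
have : 0 < U * c by apply: mulr_gt0 => //; lra.
by rewrite E' ltxx.
Qed.
End Main.

Theorem mainTheorem18 (R : rcfType) (u : 'I_2 -> int) (l1 : 'I_2 -> R) (lc : 'I_2 -> R[i]) :
  0 < u ord0 -> u ord_max = 1 ->
  V2_in_interior_K1 u l1 lc ->
  N_acts_freely u l1 lc /\ condS u l1 lc /\
  (hypersymplectic_nondeg u l1 lc <-> u ord0 = 1).
Proof.
move=> hu0 hu hV.
have [hA hB] := V2E hu0 hV.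
split; first exact: (freeL hu hu0 hA).
split; first exact: (condSL hu hu0 hA hB).
split.
  move=> Hnd; case: (eqVneq (u ord0) 1) => // hu1; exfalso.
  exact: (degenL hu hu0 hu1 hA hB Hnd).
move=> hu1 p Hp.
apply: (nondegQ hu).
exact: (QneqL hu hu1 hB Hp).
Qed.
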